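(* The space $L(\omega_1)$ is totally Lindelöf.
   Context: $L(\omega_1)$ is the set $\omega_1+1$ with the topology in which every $\alpha<\omega_1$ is isolated and the sets $]\alpha,\omega_1]=\{\gamma:\alpha<\gamma\le\omega_1\}$, $\alpha<\omega_1$, form a local base at $\omega_1$. A filter base on $X$ is a nonempty $\mathcal{F}\subseteq\mathcal{P}(X)$ with $\emptyset\notin\mathcal{F}$ and closed under pairwise intersections; it is stable under countable intersections if for every countable $S\subseteq\mathcal{F}$ there is $H\in\mathcal{F}$ with $H\subseteq\bigcap S$. $ad(\mathcal{F})=\bigcap\{\overline{F}:F\in\mathcal{F}\}$. A filter base $\mathcal{F}$ is total if every filter base $\mathcal{H}\supseteq\mathcal{F}$ satisfies $ad(\mathcal{H})\neq\emptyset$. $X$ is totally Lindelöf if every filter base on $X$ stable under countable intersections is contained in a total filter base on $X$ stable under countable intersections. *)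

(* Defs.v *)
From Stdlib Require Import Classical.

Set Implicit Arguments.

Definition countable_set (Y : Type) (S : Y -> Prop) : Prop :=
  exists f : Y -> nat, forall a b, S a -> S b -> f a = f b -> a = b.

Section Generic.
Variable X : Type.
Variable is_open : (X -> Prop) -> Prop.

Definition closure (A : X -> Prop) (x : X) : Prop :=
  forall U, is_open U -> U x -> exists y, U y /\ A y.

Definition filter_base (F : (X -> Prop) -> Prop) : Prop :=
  (exists A, F A) /\
  (forall A, F A -> exists x, A x) /\
  (forall A B, F A -> F B -> F (fun x => A x /\ B x)).

Definition stable_countable (F : (X -> Prop) -> Prop) : Prop :=
  forall S : (X -> Prop) -> Prop,
    (forall A, S A -> F A) -> countable_set S ->
    exists H, F H /\ forall A, S A -> forall x, H x -> A x.

Definition ad (F : (X -> Prop) -> Prop) (x : X) : Prop :=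
  forall A, F A -> closure A x.

Definition total (F : (X -> Prop) -> Prop) : Prop :=
  forall H : (X -> Prop) -> Prop, filter_base H ->
    (forall A, F A -> H A) -> exists x, ad H x.

Definition totally_Lindelof : Prop :=
  forall F, filter_base F -> stable_countable F ->
    exists G, filter_base G /\ stable_countable G /\ total G /\
              (forall A, F A -> G A).
End Generic.

(* (T, lt) is an order isomorphic to omega_1: a well-founded strict total
   order on an uncountable type all of whose proper initial segments are
   countable. *)
Definition omega1_like (T : Type) (lt : T -> T -> Prop) : Prop :=
  (forall a, ~ lt a a) /\
  (forall a b c, lt a b -> lt b c -> lt a c) /\
  (forall a b, lt a b \/ a = b \/ lt b a) /\
  well_founded lt /\
  ~ countable_set (fun _ : T => True) /\
  (forall a, countable_set (fun b => lt b a)).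

(* L(omega_1) has carrier omega_1 + 1 = option T, where [Some a] is the
   ordinal a < omega_1 and [None] is the point omega_1.  Points of T are
   isolated; the sets ]a, omega_1] form a local base at omega_1.  Hence
   U is open iff  U None -> exists a, ]a, omega_1] ⊆ U. *)
Definition L_open (T : Type) (lt : T -> T -> Prop) (U : option T -> Prop) : Prop :=
  U None -> exists a : T, U None /\ forall g : T, lt a g -> U (Some g).

(* Main.v *)
Require Import Defs.
From Stdlib Require Import Classical ClassicalEpsilon Cantor Lia.

Section Cnt.

Lemma choose_fun (A B : Type) (P : A -> B -> Prop) :
  (forall a, exists b, P a b) -> exists f : A -> B, forall a, P a (f a).
Proof.
  intros H. exists (fun a => proj1_sig (constructive_indefinite_description _ (H a))).
  intros a. exact (proj2_sig (constructive_indefinite_description _ (H a))).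
Qed.

Lemma cnt_sub (Y : Type) (P Q : Y -> Prop) :
  (forall y, Q y -> P y) -> countable_set P -> countable_set Q.
Proof.
  intros HQ [f Hf]. exists f. intros a b Ha Hb E. apply Hf; auto.
Qed.

Lemma cnt_single (Y : Type) (c : Y) : countable_set (fun y => y = c).
Proof. exists (fun _ => 0). intros a b -> -> _. reflexivity. Qed.

Lemma cnt_union (Y : Type) (P Q : Y -> Prop) :
  countable_set P -> countable_set Q -> countable_set (fun y => P y \/ Q y).
Proof.
  intros [f Hf] [g Hg].
  exists (fun y => if excluded_middle_informative (P y) then 2 * f y else S (2 * g y)).
  intros a b Ha Hb.
  destruct (excluded_middle_informative (P a)) as [pa|pa];
  destruct (excluded_middle_informative (P b)) as [pb|pb]; intros E.
  - apply Hf; auto. lia.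
  - exfalso. lia.
  - exfalso. lia.
  - apply Hg; [destruct Ha; tauto | destruct Hb; tauto | lia].
Qed.

Lemma cnt_image (Y Z : Type) (P : Y -> Prop) (g : Y -> Z) :
  countable_set P -> countable_set (fun z => exists y, P y /\ z = g y).
Proof.
  intros [f Hf].
  destruct (@choose_fun _ _ (fun (z : Z) (o : option Y) =>
     (exists y, P y /\ z = g y) -> exists y, o = Some y /\ P y /\ z = g y)) as [h Hh].
  { intros z. destruct (classic (exists y, P y /\ z = g y)) as [[y Hy]|N].
    - exists (Some y). intros _. exists y; auto.
    - exists None. intros E; contradiction. }
  exists (fun z => match h z with Some y => f y | None => 0 end).
  intros a b Ha Hb.
  destruct (Hh a Ha) as [ya [Ea [Pa Ga]]]. destruct (Hh b Hb) as [yb [Eb [Pb Gb]]].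
  rewrite Ea, Eb. intros E. rewrite Ga, Gb. f_equal. apply Hf; auto.
Qed.

Lemma cnt_bigunion (Y Z : Type) (I : Y -> Prop) (P : Y -> Z -> Prop) :
  countable_set I -> (forall i, I i -> countable_set (P i)) ->
  countable_set (fun z => exists i, I i /\ P i z).
Proof.
  intros [f Hf] HP.
  destruct (@choose_fun _ _ (fun (i : Y) (fi : Z -> nat) =>
     I i -> forall a b, P i a -> P i b -> fi a = fi b -> a = b)) as [F HF].
  { intros i. destruct (classic (I i)) as [Ii|Ni].
    - destruct (HP i Ii) as [fi Hfi]. exists fi. intros _; exact Hfi.
    - exists (fun _ => 0). intros; contradiction. }
  destruct (@choose_fun _ _ (fun (z : Z) (o : option Y) =>
     (exists i, I i /\ P i z) -> exists i, o = Some i /\ I i /\ P i z)) as [h Hh].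
  { intros z. destruct (classic (exists i, I i /\ P i z)) as [[y Hy]|N].
    - exists (Some y). intros _. exists y; auto.
    - exists None. intros E; contradiction. }
  exists (fun z => match h z with Some i => Cantor.to_nat (f i, F i z) | None => 0 end).
  intros a b Ha Hb.
  destruct (Hh a Ha) as [ia [Ea [Ia Pa]]]. destruct (Hh b Hb) as [ib [Eb [Ib Pb]]].
  rewrite Ea, Eb. intros E.
  apply (f_equal Cantor.of_nat) in E. rewrite !Cantor.cancel_of_to in E.
  injection E as E1 E2.
  assert (ia = ib) by (apply Hf; auto). subst ib.
  apply (HF ia Ia); auto.
Qed.

End Cnt.

Lemma ub (T : Type) (lt : T -> T -> Prop) (H : omega1_like lt) (C : T -> Prop) :
  countable_set C -> exists m, forall a, C a -> a = m \/ lt a m.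
Proof.
  destruct H as [irr [tr [tri [wf [unc segs]]]]]. intros HC.
  apply NNPP; intro N. apply unc.
  apply cnt_sub with (fun z => exists i, C i /\ lt z i).
  - intros z _. apply NNPP; intros N2. apply N. exists z. intros a Ca.
    destruct (tri a z) as [h|[h|h]]; auto. exfalso; apply N2; exists a; auto.
  - apply cnt_bigunion; auto.
Qed.

Definition tail {T : Type} (lt : T -> T -> Prop) (a : T) (x : option T) : Prop :=
  match x with None => True | Some g => lt a g end.

Theorem proposition1p1 (T : Type) (lt : T -> T -> Prop) :
  omega1_like lt -> totally_Lindelof (L_open lt).
Proof.
  intros Hom. pose proof Hom as [irr [tr [tri [wf [unc segs]]]]].
  assert (inh : exists t : T, True).
  { apply NNPP; intros N. apply unc. exists (fun _ => 0). intros a. exfalso; apply N; exists a; auto. }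
  destruct inh as [t0 _].
  intros F [[A0 FA0] [Fne Fint]] Fst.
  destruct (classic (exists A c, F A /\ forall x, A x -> exists b, x = Some b /\ (b = c \/ lt b c)))
    as [[A1 [c [FA1 HA1]]] | Ncase].
  -
    assert (Hx : exists x, forall A, F A -> A x).
    { apply NNPP; intros N.
      assert (HB : forall x, exists B, F B /\ ~ B x).
      { intros x. apply NNPP; intros N2. apply N. exists x. intros A FA.
        apply NNPP; intros N3. apply N2. exists A; auto. }
      destruct (@choose_fun _ _ _ HB) as [Bf HBf].
      destruct (Fst (fun A => A = A1 \/ exists x, A1 x /\ A = Bf x)) as [H [FH HH]].
      + intros A [->|[x [_ ->]]]; auto. apply HBf.
      + apply cnt_union. apply cnt_single. apply cnt_image.
        apply cnt_sub with (fun z => exists y, (y = c \/ lt y c) /\ z = Some y).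
        * intros z Az. destruct (HA1 z Az) as [b [-> Hb]]. exists b; auto.
        * apply cnt_image. apply cnt_union. apply cnt_single. apply segs.
      + destruct (Fne H FH) as [y Hy].
        assert (A1 y) by (apply (HH A1); auto).
        apply (proj2 (HBf y)). apply (HH (Bf y)); eauto. }
    destruct Hx as [x Hx].
    exists (fun A => A x). split; [|split; [|split]].
    + split; [exists (fun _ => True); auto|split].
      * intros A Ax. exists x; auto.
      * intros A B; split; auto.
    + intros S HS _. exists (fun y => y = x). split; auto.
      intros A SA y ->. apply HS; auto.
    + intros H [_ [Hne Hi]] HG. exists x. intros A HA U _ Ux.
      destruct (Hne _ (Hi _ _ (HG (fun y => y = x) eq_refl) HA)) as [y [-> Ay]].
      exists x; auto.
    + exact Hx.
  - assert (Hc : forall A c, F A -> exists x, A x /\ tail lt c x).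
    { intros A c FA. apply NNPP; intros N. apply Ncase. exists A, c. split; auto.
      intros x Ax. destruct x as [b|].
      - exists b. split; auto. destruct (tri b c) as [h|[h|h]]; auto.
        exfalso; apply N; exists (Some b); simpl; auto.
      - exfalso; apply N; exists None; simpl; auto. }
    assert (mono : forall a m x, (a = m \/ lt a m) -> tail lt m x -> tail lt a x).
    { intros a m [g|] [->|h]; simpl; eauto. }
    exists (fun B => exists A a, F A /\ forall x, A x -> tail lt a x -> B x).
    split; [|split; [|split]].
    + split; [exists A0, A0, t0; auto|split].
      * intros B [A [a [FA HB]]]. destruct (Hc A a FA) as [x [Ax Tx]]. eauto.
      * intros B1 B2 [A [a [FA HB1]]] [A' [a' [FA' HB2]]].
        destruct (tri a a') as [h|[h|h]].
        -- exists (fun x => A x /\ A' x), a'. split; auto. intros x [] Tx.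
           split; [apply HB1|apply HB2]; auto. apply (mono a a'); auto.
        -- subst. exists (fun x => A x /\ A' x), a'. split; auto. intros x [] Tx. split; auto.
        -- exists (fun x => A x /\ A' x), a. split; auto. intros x [] Tx.
           split; [apply HB1|apply HB2]; auto. apply (mono a' a); auto.
    + intros S HS CS.
      destruct (@choose_fun _ _ (fun B (p : ((option T -> Prop) * T)) =>
         (exists A a, F A /\ forall x, A x -> tail lt a x -> B x) ->
         F (fst p) /\ forall x, fst p x -> tail lt (snd p) x -> B x)) as [sel Hsel].
      { intros B. destruct (classic (exists A a, F A /\ forall x, A x -> tail lt a x -> B x))
          as [[A [a Ha]]|N].
        - exists (A, a). intros _; exact Ha.
        - exists (A0, t0). intros h; contradiction. }
      destruct (Fst (fun A => exists B, S B /\ A = fst (sel B))) as [H0 [FH0 HH0]].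
      { intros A [B [SB ->]]. apply Hsel; auto. }
      { apply cnt_image; auto. }
      destruct (@ub _ _ Hom (fun a => exists B, S B /\ a = snd (sel B))) as [m Hm].
      { apply cnt_image; auto. }
      exists (fun x => H0 x /\ tail lt m x). split.
      * exists H0, m. split; auto.
      * intros B SB x [H0x Tx]. apply (Hsel B (HS B SB)).
        -- apply (HH0 (fst (sel B))); eauto.
        -- apply (mono _ m); eauto.
    + intros H [_ [Hne Hi]] HG. exists None. intros A HA U Uo UN.
      destruct (Uo UN) as [a [_ Ua]].
      assert (Ht : H (tail lt a)).
      { apply HG. exists A0, a. split; auto. }
      destruct (Hne _ (Hi _ _ HA Ht)) as [y [Ay Ty]].
      exists y. split; auto. destruct y; simpl in *; auto.
    + intros A FA. exists A, t0. split; auto.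
Qed.
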